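(* In the two-party one-way communication (Holevo–Frenkel–Weiner) scenario with no pre-shared correlation between the parties, the utility of communicating one qubit is higher than that of one bit of classical communication: there exist finite sets $\mathcal{X},\mathcal{B}$ and a payoff function $\beta$ on correlations $P(\mathcal{B}|\mathcal{X})$ such that $\sup_{P\in\mathcal{Q}}\beta(P)>\sup_{P\in\mathcal{C}}\beta(P)$.
   Context: Scenario: Alice receives an input $x$ from a finite set $\mathcal{X}$, Bob must output $b$ from a finite set $\mathcal{B}$; a correlation is a conditional distribution $P=(P(b|x))$, and a task is a payoff function $\beta$ assigning a real number to each correlation; the utility of a resource is $\sup\beta(P)$ over the correlations achievable with it. $\mathcal{C}$ (one classical bit, no shared randomness, local randomness allowed): correlations $P(b|x)=\sum_{m\in\{0,1\}}E(m|x)D(b|m)$ with $E(\cdot|x)$ a probability distribution on $\{0,1\}$ for each $x$ and $D(\cdot|m)$ a probability distribution on $\mathcal{B}$ for each $m$. $\mathcal{Q}$ (one qubit, no shared correlation): correlations $P(b|x)=\operatorname{Tr}(\rho_x\pi_b)$, where each $\rho_x$ is a density operator on $\mathbb{C}^2$ and $\{\pi_b\}_{b\in\mathcal{B}}$ is a POVM on $\mathbb{C}^2$ ($\pi_b\ge0$, $\sum_b\pi_b=\mathbb{I}$). *)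

(* Defs.v *)
From HB Require Import structures.
From mathcomp Require Import all_boot all_order all_algebra.
From mathcomp Require Import complex.
From mathcomp Require Import boolp classical_sets reals constructive_ereal ereal.
Set Implicit Arguments. Unset Strict Implicit. Unset Printing Implicit Defensive.
Import Order.TTheory GRing.Theory Num.Theory.
Local Open Scope ring_scope.

Section HFW.
Variable R : realType.

Definition stochastic (I J : finType) (f : I -> J -> R) : Prop :=
  (forall i j, 0 <= f i j) /\ (forall i, \sum_(j : J) f i j = 1).

(* Correlations P(b|x) achievable with one classical bit, no shared randomness,
   local randomness allowed: P(b|x) = sum_{m in {0,1}} E(m|x) D(b|m). *)
Definition classical_corr (X B : finType) (P : X -> B -> R) : Prop :=
  exists (E : X -> 'I_2 -> R) (D : 'I_2 -> B -> R),
    stochastic E /\ stochastic D /\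
    forall x b, P x b = \sum_(m < 2) E x m * D m b.

Notation Mx := 'M[R[i]]_2.

(* positive semidefinite: v^dagger A v >= 0 (i.e. real and nonnegative) for all v;
   in R[i], 0 <= z means Im z = 0 and Re z >= 0. *)
Definition psd (A : Mx) : Prop :=
  forall v : 'cV[R[i]]_2, 0 <= ((map_mx (@conjc R) v)^T *m A *m v) 0 0.

Definition density (rho : Mx) : Prop := psd rho /\ \tr rho = 1.

Definition povm (B : finType) (pi : B -> Mx) : Prop :=
  (forall b, psd (pi b)) /\ \sum_(b : B) pi b = 1%:M.

(* Correlations achievable with one qubit, no shared correlation:
   P(b|x) = Tr(rho_x pi_b). *)
Definition quantum_corr (X B : finType) (P : X -> B -> R) : Prop :=
  exists (rho : X -> Mx) (pi : B -> Mx),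
    (forall x, density (rho x)) /\ povm pi /\
    forall x b, real_complex R (P x b) = \tr (rho x *m pi b).

End HFW.

(* Main.v *)
Require Import Defs.
From HB Require Import structures.
From mathcomp Require Import all_boot all_order all_algebra.
From mathcomp Require Import complex.
From mathcomp Require Import boolp classical_sets reals constructive_ereal ereal.
From mathcomp Require Import ring lra.
Import Order.TTheory GRing.Theory Num.Theory.
Local Open Scope ring_scope.
Local Open Scope complex_scope.

Section S.
Variable R : realType.
Notation Mx := 'M[R[i]]_2.

Definition mk (a b d : R) : Mx :=
  \matrix_(i, j) (if i == j then (if i == 0 then a else d) else b)%:C.

Lemma eq0I (u : R) : u = 0 -> u == 0. Proof. by move=> ->. Qed.
Lemma foo (x y : R) : x * y = y * x. Proof. ring. Qed.

Lemma psd_mk a b d c p q r s : 0 <= c -> 0 <= r -> 0 <= s ->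
  a = c * p ^+ 2 + r -> b = c * p * q -> d = c * q ^+ 2 + s -> psd (mk a b d).
Proof.
move=> hc hr hs -> -> -> v; rewrite /mk.
rewrite !mxE !big_ord_recr !big_ord0 !mxE !big_ord_recr !big_ord0 !mxE /=.
rewrite [v ord_max 0]complexE [v (widen_ord _ _) 0]complexE /=.
set x1 := complex.Re _. set y1 := complex.Im (v ord_max 0).
set x0 := complex.Re _. set y0 := complex.Im _.
rewrite lecE /=; apply/andP; split; first by apply: eq0I; ring.
set t := (X in 0 <= X).
have -> : t = c * ((p*x1+q*x0)^+2 + (p*y0+q*y1)^+2) + r * (x1^+2 + y0^+2) + s * (x0^+2+y1^+2) :> R
  by rewrite /t; ring.
by rewrite !addr_ge0 ?mulr_ge0 ?addr_ge0 ?sqr_ge0.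
Qed.

Lemma tr_mk a b d : \tr (mk a b d) = (a + d)%:C.
Proof. by rewrite /mxtrace !big_ord_recr big_ord0 !mxE /= add0r rmorphD. Qed.

Lemma tr_mk2 a b d a' b' d' : \tr (mk a b d *m mk a' b' d') = (a*a' + 2*b*b' + d*d')%:C.
Proof.
rewrite /mxtrace !big_ord_recr big_ord0 !mxE /= !big_ord_recr !big_ord0 !mxE /=.
rewrite !add0r -!rmorphM -!rmorphD; congr (_%:C); ring.
Qed.

Lemma mk_add a b d a' b' d' : mk a b d + mk a' b' d' = mk (a+a') (b+b') (d+d').
Proof. by apply/matrixP => i j; rewrite !mxE -rmorphD; case: ifP => _ //; case: ifP. Qed.

Lemma mk1 : mk 1 0 1 = 1%:M.
Proof.
apply/matrixP => i j; rewrite !mxE; case: (i == j) => //=; by case: ifP.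
Qed.

Definition det3 (M : 'M[R]_3) : R := \det M.

Lemma det3E (f : nat -> nat -> R) : \det (\matrix_(i < 3, j < 3) f i j) =
  f 0 0 * (f 1 1 * f 2 2 - f 1 2 * f 2 1)
  - f 0 1 * (f 1 0 * f 2 2 - f 1 2 * f 2 0)
  + f 0 2 * (f 1 0 * f 2 1 - f 1 1 * f 2 0).
Proof.
rewrite (expand_det_row _ ord0) !big_ord_recr big_ord0 /= /cofactor.
rewrite !(expand_det_row _ ord0) !big_ord_recr !big_ord0 /= /cofactor !det_mx11 !mxE /=.
rewrite /bump /=.
ring.
Qed.

Definition sel (n : nat) (u v w : R) := if n == 0%N then u else if n == 1%N then v else w.

Definition ra (x : 'I_3) := sel x 1 0 (1/2).
Definition rb (x : 'I_3) := sel x 0 0 (1/2).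
Definition rd (x : 'I_3) := sel x 0 1 (1/2).
Definition pa (x : 'I_3) := sel x (1/2) (1/4) (1/4).
Definition pb (x : 'I_3) := sel x 0 (1/4) (-1/4).
Definition pd (x : 'I_3) := sel x 0 (1/4) (3/4).

Definition QP (x b : 'I_3) : R := ra x * pa b + 2 * rb x * pb b + rd x * pd b.

Definition beta (P : 'I_3 -> 'I_3 -> R) : R :=
  (\det (\matrix_(i < 3, j < 3) P (inord i) (inord j))) ^+ 2.

Lemma QP_quantum : quantum_corr QP.
Proof.
exists (fun x => mk (ra x) (rb x) (rd x)), (fun b => mk (pa b) (pb b) (pd b)).
split; [|split].
- move=> x; split; last first.
    rewrite tr_mk; case: x => [[|[|[|m]]]] //= H; rewrite /ra /rd /sel /=.
    + by rewrite addr0.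
    + by rewrite add0r.
    + by congr (_%:C); field.
  case: x => [[|[|[|m]]]] //= H; rewrite /ra /rb /rd /sel /=.
  + by apply: (@psd_mk _ _ _ 1 1 0 0 0) => //; ring.
  + by apply: (@psd_mk _ _ _ 1 0 1 0 0) => //; ring.
  + by apply: (@psd_mk _ _ _ (1/2) 1 1 0 0) => //; ring.
- split.
    case => [[|[|[|m]]]] //= H; rewrite /pa /pb /pd /sel /=.
    + by apply: (@psd_mk _ _ _ (1/2) 1 0 0 0) => //; ring.
    + by apply: (@psd_mk _ _ _ (1/4) 1 1 0 0) => //; ring.
    + by apply: (@psd_mk _ _ _ 1 (1/2) (-1/2) 0 (1/2)) => //; field.
  rewrite !big_ord_recr big_ord0 /= add0r !mk_add -mk1 /pa /pb /pd /sel /=.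
  by congr mk; field.
- by move=> x b; rewrite tr_mk2.
Qed.

Lemma beta_QP : beta QP = 1/64.
Proof.
rewrite /beta (det3E (fun i j => QP (inord i) (inord j))) /QP /ra /rb /rd /pa /pb /pd /sel !inordK //=.
by field.
Qed.

Lemma classical_beta P : classical_corr P -> beta P = 0.
Proof.
move=> [E [D [_ [_ hP]]]].
pose E' : 'M[R]_(3,2) := \matrix_(i, m) E (inord i) m.
pose D' : 'M[R]_(2,3) := \matrix_(m, j) D m (inord j).
have hA : \matrix_(i < 3, j < 3) P (inord i) (inord j) = E' *m D'.
  apply/matrixP => i j; rewrite !mxE hP; apply: eq_bigr => m _; by rewrite !mxE.
have : ~~ ((E' *m D') \in unitmx).
  rewrite -row_free_unit /row_free; apply/negP => /eqP h.
  have := mxrankM_maxl E' D'; have := rank_leq_col E'; rewrite h => h1 h2.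
  by have := leq_trans h2 h1.
rewrite unitmxE unitfE negbK => /eqP h0.
by rewrite /beta hA h0 expr0n.
Qed.

Lemma main : exists (X B : finType) (beta : (X -> B -> R) -> R),
    (ereal_sup [set (beta P)%:E | P in @classical_corr R X B]
     < ereal_sup [set (beta P)%:E | P in @quantum_corr R X B])%E.
Proof.
exists 'I_3, 'I_3, beta.
apply: (@le_lt_trans _ _ 0%:E).
  apply: ge_ereal_sup => y [P hP <-]; by rewrite classical_beta.
apply: (@lt_le_trans _ _ (beta QP)%:E).
  by rewrite lte_fin beta_QP; lra.
apply: ereal_sup_ubound; exists QP => //; exact: QP_quantum.
Qed.
End S.

Local Close Scope complex_scope.
Local Open Scope classical_set_scope.
Local Open Scope ring_scope.

Theorem theorem2 (R : realType) :
  exists (X B : finType) (beta : (X -> B -> R) -> R),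
    (ereal_sup [set (beta P)%:E | P in @classical_corr R X B]
     < ereal_sup [set (beta P)%:E | P in @quantum_corr R X B])%E.
Proof. exact: main. Qed.
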